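(* Let $\ell, c \in \mathbb{N}$. Over directed graphs, every $\mathrm{C}^2_{\ell,c}$ formula (whose free variables are therefore among $x,y$) is equivalent to a finite disjunction $$\bigvee_{i=1}^n \big( \alpha_i(x) \land \beta_i(y) \land \gamma_i(x,y) \big),$$ where $\alpha_i(x), \beta_i(y) \in \mathrm{C}^2_{\ell,c}$ and each $\gamma_i(x,y)$ is one of the following five formulas: $E(x, y) \land E(y, x)$; $E(x, y) \land \neg E(y, x)$; $\neg E(x, y) \land E(y, x)$; $\neg E(x, y) \land\neg E(y , x)\land x\neq y$; $x=y$.
   Context: A directed graph of dimension $d$ is a tuple $G=(V,E,\lambda)$ with $V$ a finite set of nodes, $E\subseteq V\times V$ with no loops $(v,v)$, and $\lambda:V\to\{0,1\}^d$. It is identified with the first-order structure with domain $V$, binary relation $E$, and unary predicates $P_1,\dots,P_d$ where $P_i=\{v:\lambda(v)_i=1\}$. $\mathrm{C}^2$ is the fragment of first-order logic (with equality, $E$, $P_1,\dots,P_d$) using only the two variables $x,y$ but allowing counting quantifiers $\exists_k$ for $k\in\mathbb{N}$, where $\exists_k x\,\varphi$ means that $\varphi$ holds for at least $k$ distinct elements. The quantifier depth of a formula is its maximal nesting of quantifiers, and its counting rank is the maximal $k$ occurring in its counting quantifiers. $\mathrm{C}^2_{\ell,c}$ denotes the $\mathrm{C}^2$ formulas of depth at most $\ell$ and counting rank at most $c$. ''Equivalent over directed graphs'' means: satisfied by the same assignments in every directed graph (as defined, i.e. loop-free). *)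

(* Defs.v *)
From mathcomp Require Import all_boot.
Set Implicit Arguments. Unset Strict Implicit. Unset Printing Implicit Defensive.

(* Directed graphs of dimension d: finite node type, loop-free edge relation,
   labels lambda : V -> {0,1}^d given as V -> 'I_d -> bool. *)
Record digraph (d : nat) := Digraph {
  node : finType;
  edge : rel node;
  edge_irrefl : irreflexive edge;
  lab : node -> 'I_d -> bool
}.
Arguments node {d}. Arguments edge {d}. Arguments lab {d}.

Inductive var := VX | VY.

Definition var_eqb (u v : var) : bool :=
  match u, v with VX, VX | VY, VY => true | _, _ => false end.

Inductive form (d : nat) :=
  | FTrue
  | FEq of var & var
  | FE of var & var
  | FP of 'I_d & var
  | FNot of form d
  | FAnd of form d & form d
  | FOr of form d & form d
  | FEx of nat & var & form d.  (* FEx k v phi : exists at least k v, phi *)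

Arguments FTrue {d}.
Arguments FEq {d}.
Arguments FE {d}.

Fixpoint qdepth d (f : form d) : nat :=
  match f with
  | FTrue | FEq _ _ | FE _ _ | FP _ _ => 0
  | FNot g => qdepth g
  | FAnd g h | FOr g h => maxn (qdepth g) (qdepth h)
  | FEx _ _ g => (qdepth g).+1
  end.

Fixpoint crank d (f : form d) : nat :=
  match f with
  | FTrue | FEq _ _ | FE _ _ | FP _ _ => 0
  | FNot g => crank g
  | FAnd g h | FOr g h => maxn (crank g) (crank h)
  | FEx k _ g => maxn k (crank g)
  end.

Definition inC2 d (l c : nat) (f : form d) : Prop := qdepth f <= l /\ crank f <= c.

Fixpoint free d (v : var) (f : form d) : bool :=
  match f with
  | FTrue => false
  | FEq a b | FE a b => var_eqb v a || var_eqb v b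
  | FP _ a => var_eqb v a
  | FNot g => free v g
  | FAnd g h | FOr g h => free v g || free v h
  | FEx _ w g => ~~ var_eqb v w && free v g
  end.

Definition upd (V : Type) (a : var -> V) (v : var) (n : V) : var -> V :=
  fun w => if var_eqb w v then n else a w.

Fixpoint sat {d} (G : digraph d) (a : var -> node G) (f : form d) : bool :=
  match f with
  | FTrue => true
  | FEq u v => a u == a v
  | FE u v => edge G (a u) (a v)
  | FP i v => lab G (a v) i
  | FNot g => ~~ @sat d G a g
  | FAnd g h => @sat d G a g && @sat d G a h
  | FOr g h => @sat d G a g || @sat d G a h
  | FEx k v g => k <= #|[pred n : node G | @sat d G (upd a v n) g]|
  end.

Definition gequiv d (f g : form d) : Prop :=
  forall (G : digraph d) (a : var -> node G), @sat d G a f = @sat d G a g.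

Inductive etype := EBoth | EFwd | EBwd | ENone | ESame.

Definition gamma d (t : etype) : form d :=
  match t with
  | EBoth => FAnd (FE VX VY) (FE VY VX)
  | EFwd  => FAnd (FE VX VY) (FNot (FE VY VX))
  | EBwd  => FAnd (FNot (FE VX VY)) (FE VY VX)
  | ENone => FAnd (FAnd (FNot (FE VX VY)) (FNot (FE VY VX))) (FNot (FEq VX VY))
  | ESame => FEq VX VY
  end.

Definition FFalse d : form d := FNot FTrue.
Definition bigOr d (s : seq (form d)) : form d := foldr (@FOr d) (FFalse d) s.

Definition normal_disj d (s : seq (form d * form d * etype)) : form d :=
  bigOr [seq FAnd (FAnd t.1.1 t.1.2) (gamma d t.2) | t <- s].

(* Main.v *)
Require Import Defs.
From mathcomp Require Import all_boot.
From Stdlib Require Lists.List.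
Set Implicit Arguments. Unset Strict Implicit. Unset Printing Implicit Defensive.
Set Bullet Behavior "Strict Subproofs".

Section S.
Variables (d l c : nat).

Definition eqbt (t u : etype) : bool :=
  match t, u with
  | EBoth, EBoth | EFwd, EFwd | EBwd, EBwd | ENone, ENone | ESame, ESame => true
  | _, _ => false end.

Lemma eqbtP t u : reflect (t = u) (eqbt t u).
Proof. by case: t; case: u; constructor. Qed.

Definition etype_of (G : digraph d) (a : var -> node G) : etype :=
  let x := a VX in let y := a VY in
  if x == y then ESame else
  if edge G x y then (if edge G y x then EBoth else EFwd)
  else (if edge G y x then EBwd else ENone).

Lemma sat_gamma (G : digraph d) (a : var -> node G) t : sat a (gamma d t) = eqbt t (etype_of a).
Proof.
rewrite /etype_of; case: eqP => [E|NE].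
  have H : edge G (a VX) (a VY) = false by rewrite E edge_irrefl.
  have H' : edge G (a VY) (a VX) = false by rewrite E edge_irrefl.
  by case: t => /=; rewrite ?H ?H' ?E ?eqxx.
have ne : (a VX == a VY) = false by apply/eqP.
by case: t => /=; rewrite ?ne; case: (edge G (a VX) (a VY)); case: (edge G (a VY) (a VX)).
Qed.

Definition tv (G : digraph d) (a : var -> node G) e (p : form d * form d * etype) :=
  sat a p.1.1 && sat a p.1.2 && eqbt p.2 e.

Lemma sat_nd (G : digraph d) (a : var -> node G) s :
  sat a (normal_disj s) = has (tv a (etype_of a)) s.
Proof.
elim: s => //= p s IH. rewrite -IH /tv sat_gamma. by [].
Qed.

Definition gp (f g : form d) : Prop :=
  inC2 l c f /\ ~~ free VY f /\ inC2 l c g /\ ~~ free VX g.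

Fixpoint All A (P : A -> Prop) (s : seq A) : Prop :=
  match s with [::] => True | x :: r => P x /\ All P r end.

Lemma All_cat A (P : A -> Prop) s1 s2 : All P s1 -> All P s2 -> All P (s1 ++ s2).
Proof. by elim: s1 => //= x r IH [? ?] ?; split => //; apply: IH. Qed.

Lemma All_In A (P : A -> Prop) s : All P s -> forall t, List.In t s -> P t.
Proof. elim: s => //= x r IH [Hx Hr] t [<-|Ht] //; exact: IH. Qed.

Definition good (p : form d * form d * etype) := gp p.1.1 p.1.2.

Lemma inC2_and (f g : form d) : inC2 l c f -> inC2 l c g -> inC2 l c (FAnd f g).
Proof. by rewrite /inC2 /= => [[? ?] [? ?]]; rewrite !geq_max; split; apply/andP. Qed.

Lemma inC2_not (f : form d) : inC2 l c f -> inC2 l c (FNot f).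
Proof. by []. Qed.

Lemma inC2_true : inC2 l c (@FTrue d).
Proof. by []. Qed.

Fixpoint negP (P : seq (form d * form d)) : seq (form d * form d) :=
  match P with
  | [::] => [:: (FTrue, FTrue)]
  | q :: r => [seq (FAnd (FNot q.1) u.1, u.2) | u <- negP r] ++
              [seq (u.1, FAnd (FNot q.2) u.2) | u <- negP r]
  end.

Definition pv (G : digraph d) (a : var -> node G) (q : form d * form d) := sat a q.1 && sat a q.2.

Lemma has_andl A (p : pred A) (b : bool) s : has (fun x => b && p x) s = b && has p s.
Proof. elim: s => [|x r IH] /=; first by rewrite andbF.
by rewrite IH andb_orr. Qed.

Lemma negP_sem (G : digraph d) (a : var -> node G) P : has (pv a) (negP P) = ~~ has (pv a) P.
Proof.
elim: P => [|q r IH] //=; rewrite has_cat !has_map.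
have E1 : forall s, has (preim (fun u : form d * form d => (FAnd (FNot q.1) u.1, u.2)) (pv a)) s
   = ~~ sat a q.1 && has (pv a) s.
  by move=> s; rewrite -has_andl; apply: eq_has => u; rewrite /= /pv /= andbA.
have E2 : forall s, has (preim (fun u : form d * form d => (u.1, FAnd (FNot q.2) u.2)) (pv a)) s
   = ~~ sat a q.2 && has (pv a) s.
  by move=> s; rewrite -has_andl; apply: eq_has => u; rewrite /= /pv /= andbCA.
rewrite E1 E2 IH /pv.
by case: (sat a q.1); case: (sat a q.2); case: (has _ r).
Qed.

Lemma negP_good P : All (fun q => gp q.1 q.2) P -> All (fun q => gp q.1 q.2) (negP P).
Proof.
elim: P => [|q r IH] /=.
  by move=> _; split => //; rewrite /gp.
move=> [[h1 [h2 [h3 h4]]] /IH Hr]; apply: All_cat.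
  elim: (negP r) Hr => //= u r' IH' [[u1 [u2 [u3 u4]]] Hr']; split; last exact: IH'.
  rewrite /gp /=; split; first exact: inC2_and.
  by rewrite negb_or h2 u2.
elim: (negP r) Hr => //= u r' IH' [[u1 [u2 [u3 u4]]] Hr']; split; last exact: IH'.
rewrite /gp /=; do 3 (split => //); first exact: inC2_and.
by rewrite negb_or h4 u4.
Qed.

Definition pairsOf (s : seq (form d * form d * etype)) t :=
  [seq (p.1.1, p.1.2) | p <- s & eqbt p.2 t].

Lemma pairsOf_sem (G : digraph d) (a : var -> node G) s t : has (pv a) (pairsOf s t) = has (tv a t) s.
Proof.
elim: s => //= p s IH; rewrite /pairsOf /=.
have Ht : tv a t p = pv a (p.1.1, p.1.2) && eqbt p.2 t by [].
by rewrite Ht; case: (eqbt p.2 t) => /=; rewrite ?andbT ?andbF -IH.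

Qed.

Lemma pairsOf_good s t : All good s -> All (fun q => gp q.1 q.2) (pairsOf s t).
Proof.
elim: s => //= p s IH [Hp Hs]; rewrite /pairsOf /=.
by case: (eqbt p.2 t) => /=; [split => //|]; exact: IH.
Qed.

Definition negT s t := [seq (q.1, q.2, t) | q <- negP (pairsOf s t)].

Lemma negT_sem (G : digraph d) (a : var -> node G) e s t :
  has (tv a e) (negT s t) = eqbt t e && ~~ has (tv a t) s.
Proof.
rewrite has_map (@eq_has _ _ (fun q => eqbt t e && pv a q)); last first.
  by move=> q; rewrite /tv /pv /= andbC.
by rewrite has_andl negP_sem pairsOf_sem.
Qed.

Lemma negT_good s t : All good s -> All good (negT s t).
Proof.
move=> /(pairsOf_good t) /negP_good; rewrite /negT.
by elim: (negP _) => //= q r IH [? ?]; split => //; exact: IH.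
Qed.

Definition negS s := negT s EBoth ++ negT s EFwd ++ negT s EBwd ++ negT s ENone ++ negT s ESame.

Lemma negS_sem (G : digraph d) (a : var -> node G) e s : has (tv a e) (negS s) = ~~ has (tv a e) s.
Proof. by rewrite /negS !has_cat !negT_sem; case: e => /=; rewrite ?orbF. Qed.

Lemma negS_good s : All good s -> All good (negS s).
Proof. by move=> H; rewrite /negS; repeat apply: All_cat; apply: negT_good. Qed.

Fixpoint conj1 (p : form d * form d * etype) s :=
  match s with
  | [::] => [::]
  | q :: r => if eqbt p.2 q.2 then (FAnd p.1.1 q.1.1, FAnd p.1.2 q.1.2, p.2) :: conj1 p r
              else conj1 p r
  end.

Fixpoint conjS s1 s2 :=
  match s1 with [::] => [::] | p :: r => conj1 p s2 ++ conjS r s2 end.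

Lemma conj1_sem (G : digraph d) (a : var -> node G) e p s :
  has (tv a e) (conj1 p s) = tv a e p && has (tv a e) s.
Proof.
elim: s => [|q r IH] /=; first by rewrite andbF.
rewrite /tv; case: eqbtP => [E|NE] /=; rewrite IH /tv.
  rewrite E /=; case: (sat a p.1.1); case: (sat a p.1.2); case: (sat a q.1.1);
    case: (sat a q.1.2); case: (eqbt q.2 e) => //=.
case: eqbtP => [E1|]; last by rewrite !andbF.
case: eqbtP => [E2|]; last by rewrite !andbF.
by exfalso; apply: NE; rewrite E1 E2.
Qed.

Lemma conjS_sem (G : digraph d) (a : var -> node G) e s1 s2 :
  has (tv a e) (conjS s1 s2) = has (tv a e) s1 && has (tv a e) s2.
Proof.
by elim: s1 => //= p r IH; rewrite has_cat conj1_sem IH andb_orl.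
Qed.

Lemma conj1_good p s2 : good p -> All good s2 -> All good (conj1 p s2).
Proof.
move=> [p1 [p2 [p3 p4]]].
elim: s2 => //= q r' IH' [[q1 [q2 [q3 q4]]] Hr'].
case: (eqbt p.2 q.2) => /=; last exact: IH'.
split; last exact: IH'.
rewrite /good /gp /=; split; first exact: inC2_and.
split; first by rewrite negb_or p2 q2.
split; first exact: inC2_and.
by rewrite negb_or p4 q4.
Qed.

Lemma conjS_good s1 s2 : All good s1 -> All good s2 -> All good (conjS s1 s2).
Proof.
elim: s1 => //= p r IH [Hp Hr] H2; apply: All_cat; last exact: IH.
exact: conj1_good.
Qed.

Definition all5 := [:: EBoth; EFwd; EBwd; ENone; ESame].

Definition Spec (phi : form d) :=
  exists s, All good s /\ forall (G : digraph d) (a : var -> node G), sat a phi = has (tv a (etype_of a)) s.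

Lemma has_all5 e : has (fun t => eqbt t e) all5.
Proof. by case: e. Qed.

Lemma trickX phi : inC2 l c phi -> ~~ free VY phi -> Spec phi.
Proof.
move=> H1 H2; exists [seq (phi, FTrue, t) | t <- all5]; split.
  by rewrite /=; do 5 (split; first by rewrite /good /gp).
move=> G a; rewrite has_map /tv /=.
case: (sat a phi) => /=; last by [].
by case: (etype_of a).
Qed.

Lemma trickY phi : inC2 l c phi -> ~~ free VX phi -> Spec phi.
Proof.
move=> H1 H2; exists [seq (FTrue, phi, t) | t <- all5]; split.
  by rewrite /=; do 5 (split; first by rewrite /good /gp).
move=> G a; rewrite has_map /tv /=.
case: (sat a phi) => /=; last by [].
by case: (etype_of a).
Qed.

Lemma main phi : inC2 l c phi -> Spec phi.
Proof.
elim: phi.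
- by move=> H; apply: trickX.
- case=> [] [] H; try (apply: trickX => //; fail); try (apply: trickY => //; fail).
  + exists [:: (FTrue, FTrue, ESame)]; split; first by split => //; rewrite /good /gp.
    move=> G a; rewrite /= /tv /etype_of /= orbF.
    case: eqP => //= _; case: (edge G _ _); case: (edge G _ _) => //.
  + exists [:: (FTrue, FTrue, ESame)]; split; first by split => //; rewrite /good /gp.
    move=> G a; rewrite /= /tv /etype_of /= orbF eq_sym.
    case: eqP => //= _; case: (edge G _ _); case: (edge G _ _) => //.
- case=> [] [] H; try (apply: trickX => //; fail); try (apply: trickY => //; fail).
  + exists [:: (FTrue, FTrue, EBoth); (FTrue, FTrue, EFwd)].
    split; first by split; [|split] => //; rewrite /good /gp.
    move=> G a; rewrite /= /tv /etype_of /= orbF.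
    case: eqP => [E|_] /=; first by rewrite E edge_irrefl.
    by case: (edge G (a VX) _); case: (edge G (a VY) _).
  + exists [:: (FTrue, FTrue, EBoth); (FTrue, FTrue, EBwd)].
    split; first by split; [|split] => //; rewrite /good /gp.
    move=> G a; rewrite /= /tv /etype_of /= orbF.
    case: eqP => [E|_] /=; first by rewrite E edge_irrefl.
    by case: (edge G (a VX) _); case: (edge G (a VY) _).
- by move=> i [] H; [apply: trickX | apply: trickY].
- move=> g IH H; have [s [Hs Hsem]] := IH H.
  exists (negS s); split; first exact: negS_good.
  by move=> G a; rewrite negS_sem /= Hsem.
- move=> g IHg h IHh [H1 H2]; move: H1 H2; rewrite /= !geq_max => /andP[q1 q2] /andP[c1 c2].
  have [s1 [Hs1 Hsem1]] := IHg (conj q1 c1); have [s2 [Hs2 Hsem2]] := IHh (conj q2 c2).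
  exists (conjS s1 s2); split; first exact: conjS_good.
  by move=> G a; rewrite conjS_sem /= Hsem1 Hsem2.
- move=> g IHg h IHh [H1 H2]; move: H1 H2; rewrite /= !geq_max => /andP[q1 q2] /andP[c1 c2].
  have [s1 [Hs1 Hsem1]] := IHg (conj q1 c1); have [s2 [Hs2 Hsem2]] := IHh (conj q2 c2).
  exists (s1 ++ s2); split; first exact: All_cat.
  by move=> G a; rewrite has_cat /= Hsem1 Hsem2.
- by move=> k [] g _ H; [apply: trickY | apply: trickX].
Qed.

End S.

Theorem lemma1 (d l c : nat) (phi : form d) :
  inC2 l c phi ->
  exists s : seq (form d * form d * etype),
    (forall t, List.In t s ->
       inC2 l c t.1.1 /\ ~~ free VY t.1.1 /\
       inC2 l c t.1.2 /\ ~~ free VX t.1.2) /\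
    gequiv phi (normal_disj s).
Proof.
move=> /main [s [Hs Hsem]]; exists s; split.
  by move=> t Ht; have := All_In Hs Ht.
by move=> G a; rewrite sat_nd Hsem.
Qed.
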